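(* Let $k$ be a field and let $V_\bullet$ be a complex of finite dimensional $k$-vector spaces, indexed cohomologically (differential $d_i:V_i\to V_{i+1}$, $i\in\mathbb{Z}$). Call a finite interval $S=[M,N]\subset\mathbb{Z}$ a stretch if it is maximal (among finite intervals) with respect to the property that $d_i\neq 0$ whenever $i,i+1\in S$. Let $\{T_i\}_{i\in\mathbb{Z}}$ be scalars in $k$ such that $\sum_{i\in S}(-1)^iT_i=0$ for every stretch $S$ of $V_\bullet$. Then there exists a null-homotopic chain map $\tau_\bullet:V_\bullet\to V_\bullet$ such that $\operatorname{tr}(\tau_i)=T_i$ for every $i\in\mathbb{Z}$.
   Context: $\operatorname{tr}$ denotes the trace of an endomorphism of a finite dimensional vector space. A chain map is null-homotopic if it is chain homotopic to the zero map. *)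

(* Defs.v *)
From HB Require Import structures.
From mathcomp Require Import all_boot all_order all_algebra.
Set Implicit Arguments. Unset Strict Implicit. Unset Printing Implicit Defensive.
Import Order.TTheory GRing.Theory Num.Theory.
Local Open Scope ring_scope.

(* A cohomologically indexed complex of finite-dimensional k-vector spaces:
   V_i = k^(V i) (row vectors), differential d i : V_i -> V_(i+1) given by a
   matrix acting on the right (row-vector convention), so d_(i+1) o d_i = 0
   reads  d i *m d (i+1) = 0. *)

Definition nonzero_on (k : fieldType) (V : int -> nat)
  (d : forall i : int, 'M[k]_(V i, V (i + 1))) (M N : int) : Prop :=
  forall i : int, M <= i -> i + 1 <= N -> d i != 0.

Definition is_stretch (k : fieldType) (V : int -> nat)
  (d : forall i : int, 'M[k]_(V i, V (i + 1))) (M N : int) : Prop :=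
  [/\ M <= N, nonzero_on d M N &
      forall M' N' : int, M' <= M -> N <= N' -> M' <= N' ->
        nonzero_on d M' N' -> M' = M /\ N' = N].

Definition alt_sum (k : fieldType) (T : int -> k) (M N : int) : k :=
  \sum_(j < `|N - M|%N.+1) (-1) ^ (M + j%:Z) * T (M + j%:Z).

(* Main.v *)
Require Import Defs.
From HB Require Import structures.
From mathcomp Require Import all_boot all_order all_algebra zify.
Import Order.TTheory GRing.Theory Num.Theory.
Set Implicit Arguments. Unset Strict Implicit. Unset Printing Implicit Defensive.
Local Open Scope ring_scope.

Lemma tr_delta (k : fieldType) m n (A : 'M[k]_(m,n)) a b :
  \tr (delta_mx b a *m A) = A a b.
Proof.
rewrite /mxtrace (bigD1 b) //= big1 ?addr0.
  rewrite mxE (bigD1 a) //= big1 ?addr0; first by rewrite mxE !eqxx mul1r.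
  by move=> l /negbTE nl; rewrite mxE nl andbF mul0r.
move=> i /negbTE ni; rewrite mxE big1 // => l _; by rewrite mxE ni mul0r.
Qed.

Lemma exH (k : fieldType) m n (A : 'M[k]_(m,n)) (c : k) :
  (A = 0 -> c = 0) -> exists H : 'M_(n,m), \tr (H *m A) = c.
Proof.
move=> HA.
case: (pickP (fun ab : 'I_m * 'I_n => A ab.1 ab.2 != 0)) => [[a b] /= nz | none].
  exists ((c / A a b) *: delta_mx b a).
  by rewrite -scalemxAl mxtraceZ tr_delta mulfVK.
exists 0; rewrite mul0mx mxtrace0 HA //.
apply/matrixP => a b; move: (none (a, b)) => /= /negbFE /eqP ->; by rewrite mxE.
Qed.

Section Alt.
Variables (k : fieldType) (T : int -> k).

Lemma altE M (n : nat) : alt_sum T M (M + n%:Z)%R =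
  \sum_(j < n.+1) (-1) ^ (M + j%:Z) * T (M + j%:Z).
Proof. rewrite /alt_sum; have -> : absz (M + n%:Z - M)%R = n by lia. by []. Qed.

Lemma alt1 M : alt_sum T M M = (-1) ^ M * T M.
Proof. by have := altE M 0; rewrite big_ord1 !addr0. Qed.

Lemma altR M N : M <= N -> alt_sum T M (N + 1) = alt_sum T M N + (-1) ^ (N + 1) * T (N + 1).
Proof.
move=> le; have -> : N = M + (absz (N - M)%R)%:Z by lia.
move: (absz (N - M)%R) => n.
have E : M + n%:Z + 1 = M + n.+1%:Z by lia.
by rewrite E !altE big_ord_recr /=.
Qed.

Lemma altL M N : M < N -> alt_sum T M N = (-1) ^ M * T M + alt_sum T (M + 1) N.
Proof.
move=> lt; have -> : N = M + 1 + (absz (N - M - 1)%R)%:Z by lia.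
move: (absz (N - M - 1)%R) => n.
have E : M + 1 + n%:Z = M + n.+1%:Z by lia.
rewrite [alt_sum T (M + 1) _]altE E altE big_ord_recl /= addr0.
congr (_ + _); apply: eq_bigr => j _.
have -> : M + (bump 0 j)%:Z = M + 1 + j%:Z by rewrite /bump /=; lia.
by [].
Qed.

Lemma sgS (i : int) : (-1) ^ (i + 1) = - ((-1) ^ i) :> k.
Proof. by rewrite expfzDr ?oppr_eq0 ?oner_eq0 // expr1z mulrN1. Qed.

Lemma sgsq (i : int) : (-1) ^ i * (-1) ^ i = 1 :> k.
Proof.
rewrite -expfzDr ?oppr_eq0 ?oner_eq0 //.
have -> : i + i = 2%:Z * i by lia.
rewrite -exprz_exp.
have -> : (-1 : k) ^ (2%:Z) = 1 by rewrite -exprnP expr2 mulrNN mulr1.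
by rewrite exp1rz.
Qed.
End Alt.

From mathcomp Require Import ring.

Section SS.
Variables (k : fieldType) (T : int -> k).
Definition S (p i : int) : k :=
  if p < i then (-1) ^ i * alt_sum T (p + 1) i
  else if i < p then - ((-1) ^ i * alt_sum T (i + 1) p) else 0.

Lemma S_id p : S p p = 0.
Proof. by rewrite /S ltxx. Qed.

Lemma keyS p i : S p i + S p (i + 1) = T (i + 1).
Proof.
have hs := sgsq k i; rewrite /S.
have [lt|ge] := ltP p i.
  have -> : p < i + 1 by lia.
  rewrite altR; last by lia.
  rewrite sgS; move: ((-1) ^ i) hs => s hs.
  apply: (@eq_trans _ _ (s * s * T (i + 1))); [ring | by rewrite hs mul1r].
have [->|ne] := eqVneq p i.
  rewrite ?ltxx (_ : i < i + 1) ?ltxx; last by lia.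
  rewrite alt1 sgS; move: ((-1) ^ i) hs => s hs.
  apply: (@eq_trans _ _ (s * s * T (i + 1))); [ring | by rewrite hs mul1r].
have ltp : i < p by lia.
rewrite ltp.
have [->|ne2] := eqVneq p (i + 1).
  rewrite ?ltxx alt1 sgS; move: ((-1) ^ i) hs => s hs.
  apply: (@eq_trans _ _ (s * s * T (i + 1))); [ring | by rewrite hs mul1r].
rewrite (_ : (p < i + 1) = false); last by lia.
rewrite (_ : i + 1 < p); last by lia.
rewrite (@altL _ T (i + 1) p); last by lia.
rewrite sgS; move: ((-1) ^ i) hs => s hs.
apply: (@eq_trans _ _ (s * s * T (i + 1))); [ring | by rewrite hs mul1r].
Qed.
End SS.

From Stdlib Require Import Classical ClassicalEpsilon.

Section Tcon.
Variables (k : fieldType) (T : int -> k) (Z : int -> bool).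
Hypothesis HZ1 : exists z, Z z.
Hypothesis HZ2 : forall q i, q < i -> Z q -> Z i ->
  (forall j, q < j -> j < i -> ~~ Z j) -> alt_sum T (q + 1) i = 0.

Definition Spec (i q : int) := Z q /\
  ((q <= i /\ forall j, q < j -> j <= i -> ~~ Z j) \/
   ((forall j, j <= i -> ~~ Z j) /\ i < q /\ forall j, i < j -> j < q -> ~~ Z j)).

Lemma spec_ex i : exists q, Spec i q.
Proof.
case: (classic (exists j, j <= i /\ Z j)) => [[j0 [le0 Z0]]|no].
  have ex : exists n : nat, (fun n : nat => Z (i - n%:Z)) n.
    by exists (absz (i - j0)%R); rewrite /= (_ : i - _ = j0) //; lia.
  case: (ex_minnP ex) => m Zm minm.
  exists (i - m%:Z); split => //; left; split; first by lia.
  move=> j lt1 le1; apply/negP => Zj.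
  have := minm (absz (i - j)%R); rewrite (_ : i - _ = j); last by lia.
  move=> /(_ Zj); lia.
have nZ : forall j, j <= i -> ~~ Z j.
  by move=> j le; apply/negP => Zj; apply: no; exists j.
case: HZ1 => z Zz.
have lt : i < z by case: (leP z i) => // h; move: (nZ z h); rewrite Zz.
have ex : exists n : nat, (fun n : nat => Z (i + n%:Z)) n.
  by exists (absz (z - i)%R); rewrite /= (_ : i + _ = z) //; lia.
case: (ex_minnP ex) => m Zm minm.
exists (i + m%:Z); split => //; right; split => //.
have m0 : m != 0%N.
  by apply/eqP => m0; move: Zm; rewrite m0 addr0 (negbTE (nZ i (lexx i))).
split; first by lia.
move=> j lt1 le1; apply/negP => Zj.
have := minm (absz (j - i)%R); rewrite (_ : i + _ = j); last by lia.
move=> /(_ Zj); lia.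
Qed.

Lemma spec_uniq i q q' : Spec i q -> Spec i q' -> q = q'.
Proof.
move=> [Zq [[le1 h1]|[h1 [lt1 h1']]]] [Zq' [[le2 h2]|[h2 [lt2 h2']]]].
- case: (ltgtP q q') => // c.
    by move: (h1 q' c le2); rewrite Zq'.
  by move: (h2 q c le1); rewrite Zq.
- by move: (h2 q le1); rewrite Zq.
- by move: (h1 q' le2); rewrite Zq'.
- case: (ltgtP q q') => // c.
    by move: (h2' q lt1 c); rewrite Zq.
  by move: (h1' q' lt2 c); rewrite Zq'.
Qed.

Definition pp (i : int) : int := proj1_sig (constructive_indefinite_description _ (spec_ex i)).
Lemma ppP i : Spec i (pp i).
Proof. exact: (proj2_sig (constructive_indefinite_description _ (spec_ex i))). Qed.

Definition tt (i : int) : k := S T (pp i) i.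

Lemma spec_self i : Z i -> Spec i i.
Proof. by move=> Zi; split => //; left; split => // j h1 h2; lia. Qed.

Lemma tt_R1 i : Z i -> tt i = 0.
Proof. by move=> Zi; rewrite /tt (spec_uniq (ppP i) (spec_self Zi)) S_id. Qed.

Lemma tt_R2 i : tt i + tt (i + 1) = T (i + 1).
Proof.
rewrite /tt; case: (boolP (Z (i + 1))) => Zi1.
  rewrite (spec_uniq (ppP (i + 1)) (spec_self Zi1)).
  case: (ppP i) => Zq [[le1 h1]|[h1 [lt1 h1']]].
    have := keyS T (pp i) i.
    have E : S T (pp i) (i + 1) = 0.
      rewrite /S (_ : pp i < i + 1); last by lia.
      rewrite HZ2 ?mulr0 //; first by lia.
      by move=> j a b; apply: h1 => //; lia.
    by rewrite E addr0 S_id addr0.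
  have -> : pp i = i + 1.
    case: (ltgtP (pp i) (i + 1)) => // c; first lia.
    have l : i < i + 1 by lia.
    by move: (h1' (i + 1) l c); rewrite Zi1.
  exact: keyS.
suff -> : pp i = pp (i + 1) by apply: keyS.
apply: (spec_uniq (ppP i)).
case: (ppP (i + 1)) => Zq [[le1 h1]|[h1 [lt1 h1']]]; split => //.
  left; split.
    case: (ltgtP (pp (i + 1)) (i + 1)) => c; [lia | lia |].
    by move: Zq; rewrite c (negbTE Zi1).
  by move=> j a b; apply: h1 => //; lia.
right; split; first by move=> j a; apply: h1; lia.
split; first by lia.
move=> j a b; case: (eqVneq j (i + 1)) => [->//|ne].
apply: h1' => //; lia.
Qed.

Lemma tt_ex : exists t : int -> k,
  (forall i, Z i -> t i = 0) /\ (forall i, t i + t (i + 1) = T (i + 1)).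
Proof. exists tt; split; [exact: tt_R1 | exact: tt_R2]. Qed.
End Tcon.

Lemma castG (k : fieldType) (V : int -> nat) (G : forall j : int, 'M[k]_(V (j + 1)))
  j j' (e : j = j') (E : V (j + 1) = V (j' + 1)) : castmx (E, E) (G j) = G j'.
Proof. by case: j' / e E => E; rewrite (eq_irrelevance E erefl) castmx_id. Qed.

Unset Implicit Arguments.
Theorem lemmaB (k : fieldType) (V : int -> nat)
  (d : forall i : int, 'M[k]_(V i, V (i + 1)))
  (Hd : forall i : int, d i *m d (i + 1) = 0)
  (T : int -> k)
  (HT : forall M N : int, is_stretch d M N -> alt_sum T M N = 0) :
  exists tau : forall i : int, 'M[k]_(V i),
    [/\ (* chain map *)
        forall i : int, tau i *m d i = d i *m tau (i + 1),
        (* null-homotopic: h_i : V_(i+1) -> V_i with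
           tau_(i+1) = h_(i+1) o d_(i+1) + d_i o h_i *)
        exists h : forall i : int, 'M[k]_(V (i + 1), V i),
          forall i : int, tau (i + 1) = d (i + 1) *m h (i + 1) + h i *m d i
      & forall i : int, \tr (tau i) = T i].
Proof.
have [t [R1 R2]] : exists t : int -> k,
    (forall i, d i = 0 -> t i = 0) /\ (forall i, t i + t (i + 1) = T (i + 1)).
  case: (classic (forall j, d j != 0)) => [allnz|notall].
    have HZ2 : forall q i : int, q < i -> q == -1 -> i == -1 ->
        (forall j, q < j -> j < i -> ~~ (j == -1)) -> alt_sum T (q + 1) i = 0.
      by move=> q i lt /eqP Zq /eqP Zi; move: lt; rewrite Zq Zi ltxx.
    have [t [_ R2]] := @tt_ex k T (fun i => i == -1) (ex_intro _ (-1) (eqxx _)) HZ2.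
    exists t; split => // i di; by move: (allnz i); rewrite di eqxx.
  have HZ1 : exists z, d z == 0.
    by case: (not_all_ex_not _ _ notall) => z /negP /negbNE; exists z.
  suff HZ2 : forall q i : int, q < i -> d q == 0 -> d i == 0 ->
        (forall j, q < j -> j < i -> ~~ (d j == 0)) -> alt_sum T (q + 1) i = 0.
    have [t [R1 R2]] := @tt_ex k T (fun i => d i == 0) HZ1 HZ2.
    by exists t; split => // i di; apply: R1; rewrite di.
  move=> q i lt Zq Zi btw.
  apply: HT; split; first by lia.
    by move=> j a b; apply: btw; lia.
  move=> M' N' a b c nz.
  case: (ltgtP M' (q + 1)) => cM.
  - have := nz q; rewrite (eqP Zq) eqxx => H; exfalso.
    by have := H ltac:(lia) ltac:(lia).
  - lia.
  - split => //; case: (ltgtP N' i) => cN //; first lia.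
    have := nz i; rewrite (eqP Zi) eqxx => H; exfalso.
    by have := H ltac:(lia) ltac:(lia).
pose hP i := exH (R1 i).
pose h i := proj1_sig (constructive_indefinite_description _ (hP i)).
have hE : forall i, \tr (h i *m d i) = t i.
  by move=> i; exact: (proj2_sig (constructive_indefinite_description _ (hP i))).
pose G j := h j *m d j.
pose E i : V (i - 1 + 1) = V i := congr1 V (subrK 1 i).
pose tau i := d i *m h i + castmx (E i, E i) (G (i - 1)).
have Htau : forall i, tau (i + 1) = d (i + 1) *m h (i + 1) + h i *m d i.
  move=> i; rewrite /tau; congr (_ + _).
  exact: (castG G (addrK 1 i)).
exists tau; split.
- move=> i; rewrite -[i](subrK 1); move: (i - 1) => j.
  rewrite !Htau mulmxDl mulmxDr -!mulmxA Hd mulmx0 addr0.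
  by rewrite !mulmxA Hd mul0mx add0r.
- by exists h.
- move=> i; rewrite -[i](subrK 1); move: (i - 1) => j.
  by rewrite Htau mxtraceD mxtrace_mulC !hE addrC R2.
Qed.
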